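(* In the altruistic controlled social learning model described in the context, $V^*_A(b)\le0$ for all $b\in[0,1]$, $V^*_A(b)=V^*_A(1-b)$ for all $b\in[0,1]$, and $V^*_A(0)=V^*_A(1)=0$, with $\pi^*_A(0)=\pi^*_A(1)=p$.
   Context: A binary state $\omega\in\{G,B\}$ is drawn once. Agents $i=1,2,\dots$ act in sequence; a planner chooses precision $q_i\in[0.5,1]$ and agent $i$ receives a private signal $s_i$ with $\mathbb{P}(s_i=\omega)=q_i$, conditionally independent given $\omega$. Let $y(b,q)=1+2bq-b-q$, $z(b,q)=b+q-2bq$. With public belief $b_i$, agent $i$ takes $a_i=s_i$ if $1-q_i\le b_i\le q_i$, $G$ if $b_i>q_i$, $B$ if $b_i<1-q_i$; the public belief becomes $\frac{q_ib_i}{y(b_i,q_i)}$ (if $s_i=G$) or $\frac{(1-q_i)b_i}{z(b_i,q_i)}$ (if $s_i=B$) when $1-q_i\le b_i\le q_i$, and stays $b_i$ otherwise. With $C>0$, baseline $p\in[0.5,1)$ and cost $\beta:[0.5,1]\to[0,\infty)$ non-negative, increasing, continuous, concave with $\beta(p)=0$, the altruistic reward is $r_A(b,q)=-\beta(q)-C\min(b,1-b,1-q)$. Policies are deterministic Markov maps $\pi:[0,1]\to[0.5,1]$; for $\delta\in[0,1)$, $V^\pi_A(b)=\mathbb{E}[\sum_{i\ge1}\delta^{i-1}r_A(b_i,\pi(b_i))\mid b_1=b]$, $V^*_A=\sup_\pi V^\pi_A$, and $\pi^*_A$ is an optimal policy. *)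

(* Defs.v *)
From Stdlib Require Import Reals.
From Coquelicot Require Import Coquelicot.
Open Scope R_scope.

Definition yq (b q : R) : R := 1 + 2 * b * q - b - q.
Definition zq (b q : R) : R := b + q - 2 * b * q.

Definition rA (beta : R -> R) (C b q : R) : R :=
  - beta q - C * Rmin b (Rmin (1 - b) (1 - q)).

Definition cost_ok (beta : R -> R) (p : R) : Prop :=
  (forall x, 1/2 <= x <= 1 -> 0 <= beta x) /\
  (forall x y, 1/2 <= x <= 1 -> 1/2 <= y <= 1 -> x <= y -> beta x <= beta y) /\
  (forall x, 1/2 <= x <= 1 -> forall eps, 0 < eps -> exists d, 0 < d /\
      forall y, 1/2 <= y <= 1 -> Rabs (y - x) < d -> Rabs (beta y - beta x) < eps) /\
  (forall x y t, 1/2 <= x <= 1 -> 1/2 <= y <= 1 -> 0 <= t <= 1 ->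
      t * beta x + (1 - t) * beta y <= beta (t * x + (1 - t) * y)) /\
  beta p = 0.

Definition policy (pi : R -> R) : Prop := forall b, 1/2 <= pi b <= 1.

(* Vn n pi b = E[ sum_{i=1}^{n} delta^(i-1) r_A(b_i, pi b_i) | b_1 = b ],
   computed via the belief dynamics: if 1-q <= b <= q the agent follows its
   signal, which is G with probability y(b,q) (belief -> q b / y) and B with
   probability z(b,q) (belief -> (1-q) b / z); otherwise the belief stays. *)
Fixpoint Vn (beta : R -> R) (C delta : R) (pi : R -> R) (n : nat) (b : R) : R :=
  match n with
  | O => 0
  | S m =>
      let q := pi b in
      rA beta C b q + delta *
        (if Rle_dec (1 - q) b then
           if Rle_dec b q then
             yq b q * Vn beta C delta pi m (q * b / yq b q)
             + zq b q * Vn beta C delta pi m ((1 - q) * b / zq b q)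
           else Vn beta C delta pi m b
         else Vn beta C delta pi m b)
  end.

Definition VA (beta : R -> R) (C delta : R) (pi : R -> R) (b : R) : Rbar :=
  Lim_seq (fun n => Vn beta C delta pi n b).

Definition VAstar (beta : R -> R) (C delta : R) (b : R) : Rbar :=
  Lub_Rbar (fun v => exists pi, policy pi /\ VA beta C delta pi b = Finite v).

(* Main.v *)
Require Import Defs.
From Stdlib Require Import Reals Lra Psatz.
From Coquelicot Require Import Coquelicot.
Open Scope R_scope.

Lemma div01 a y : 0 <= a <= y -> 0 < y -> 0 <= a / y <= 1.
Proof.
  intros Ha Hy. split.
  - unfold Rdiv. apply Rmult_le_pos; [lra|]. left; apply Rinv_0_lt_compat; lra.
  - apply (Rmult_le_reg_r y); [lra|].
    replace (a / y * y) with a by (field; lra). lra.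
Qed.

Lemma Vn_nonpos beta C delta pi :
  (forall x, 1/2 <= x <= 1 -> 0 <= beta x) -> 0 < C -> 0 <= delta -> policy pi ->
  forall n b, 0 <= b <= 1 -> Vn beta C delta pi n b <= 0.
Proof.
  intros Hb0 HC Hd Hpi n. induction n as [|m IH]; intros b Hb; simpl.
  { lra. }
  assert (Hq := Hpi b). set (q := pi b) in *.
  assert (Hr : rA beta C b q <= 0).
  { unfold rA. assert (0 <= beta q) by (apply Hb0; lra).
    assert (0 <= Rmin b (Rmin (1 - b) (1 - q))) by
      (apply Rmin_glb; [lra| apply Rmin_glb; lra]).
    nra. }
  assert (Hy : 0 <= yq b q) by (unfold yq; nra).
  assert (Hz : 0 <= zq b q) by (unfold zq; nra).
  assert (T1 : yq b q * Vn beta C delta pi m (q * b / yq b q) <= 0).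
  { destruct (Req_dec (yq b q) 0) as [E|E].
    - rewrite E; lra.
    - assert (Vn beta C delta pi m (q * b / yq b q) <= 0).
      { apply IH, div01; unfold yq in *; [split; nra | lra]. }
      nra. }
  assert (T2 : zq b q * Vn beta C delta pi m ((1 - q) * b / zq b q) <= 0).
  { destruct (Req_dec (zq b q) 0) as [E|E].
    - rewrite E; lra.
    - assert (Vn beta C delta pi m ((1 - q) * b / zq b q) <= 0).
      { apply IH, div01; unfold zq in *; [split; nra | lra]. }
      nra. }
  assert (Hm := IH b Hb).
  destruct (Rle_dec (1 - q) b); [destruct (Rle_dec b q)|]; nra.
Qed.

Lemma Vn_sym beta C delta pi n x :
  Vn beta C delta (fun t => pi (1 - t)) n (1 - x) = Vn beta C delta pi n x.
Proof.
  revert x. induction n as [|m IH]; intros b; simpl; [reflexivity|].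
  replace (1 - (1 - b)) with b by ring.
  set (q := pi b).
  assert (Er : rA beta C (1 - b) q = rA beta C b q).
  { unfold rA. replace (1 - (1 - b)) with b by ring.
    f_equal. f_equal.
    unfold Rmin.
    repeat (destruct Rle_dec); lra. }
  rewrite Er. f_equal. f_equal.
  assert (Ey : yq (1 - b) q = zq b q) by (unfold yq, zq; ring).
  assert (Ez : zq (1 - b) q = yq b q) by (unfold yq, zq; ring).
  rewrite Ey, Ez.
  destruct (Rle_dec (1 - q) b) as [h1|h1];
  destruct (Rle_dec (1 - q) (1 - b)) as [h2|h2];
  destruct (Rle_dec b q) as [h3|h3];
  destruct (Rle_dec (1 - b) q) as [h4|h4]; try lra.
  - rewrite Rplus_comm. f_equal.
    + destruct (Req_dec (yq b q) 0) as [E|E]; [rewrite E; ring|].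
      replace ((1 - q) * (1 - b) / yq b q) with (1 - q * b / yq b q)
        by (unfold yq in *; field; auto).
      rewrite IH; reflexivity.
    + destruct (Req_dec (zq b q) 0) as [E|E]; [rewrite E; ring|].
      replace (q * (1 - b) / zq b q) with (1 - (1 - q) * b / zq b q)
        by (unfold zq in *; field; auto).
      rewrite IH; reflexivity.
  - rewrite <- (IH b). reflexivity.
  - rewrite <- (IH b). reflexivity.
  - rewrite <- (IH b). reflexivity.
Qed.

Lemma VA_sym beta C delta pi b :
  VA beta C delta (fun t => pi (1 - t)) (1 - b) = VA beta C delta pi b.
Proof. unfold VA. apply Lim_seq_ext. intros n. apply Vn_sym. Qed.

Lemma Vn_zero beta C delta pi p b n :
  beta p = 0 -> 0 < C -> 1/2 <= p < 1 -> pi b = p -> (b = 0 \/ b = 1) ->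
  Vn beta C delta pi n b = 0.
Proof.
  intros Hbp HC Hp Hpb Hb. induction n as [|m IH]; simpl; [reflexivity|].
  rewrite Hpb, IH.
  assert (rA beta C b p = 0).
  { unfold rA. rewrite Hbp. destruct Hb as [-> | ->]; unfold Rmin;
    repeat destruct Rle_dec; lra. }
  rewrite H.
  destruct Hb as [-> | ->]; repeat destruct Rle_dec; try lra.
Qed.

Lemma VA_zero beta C delta pi p b :
  beta p = 0 -> 0 < C -> 1/2 <= p < 1 -> pi b = p -> (b = 0 \/ b = 1) ->
  VA beta C delta pi b = Finite 0.
Proof.
  intros. unfold VA.
  rewrite (Lim_seq_ext _ (fun _ => 0)).
  - apply Lim_seq_const.
  - intros n. eapply Vn_zero; eauto.
Qed.

Theorem lemma8 (beta : R -> R) (C p delta : R) :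
  0 < C -> 1/2 <= p < 1 -> 0 <= delta < 1 -> cost_ok beta p ->
  (forall b, 0 <= b <= 1 -> Rbar_le (VAstar beta C delta b) (Finite 0)) /\
  (forall b, 0 <= b <= 1 -> VAstar beta C delta b = VAstar beta C delta (1 - b)) /\
  VAstar beta C delta 0 = Finite 0 /\ VAstar beta C delta 1 = Finite 0 /\
  (forall pi, policy pi -> pi 0 = p -> pi 1 = p ->
     VA beta C delta pi 0 = VAstar beta C delta 0 /\
     VA beta C delta pi 1 = VAstar beta C delta 1).
Proof.
  intros HC Hp Hd [Hb0 [_ [_ [_ Hbp]]]].
  assert (P1 : forall b, 0 <= b <= 1 -> Rbar_le (VAstar beta C delta b) (Finite 0)).
  { intros b Hb. unfold VAstar.
    destruct (Lub_Rbar_correct (fun v => exists pi, policy pi /\ VA beta C delta pi b = Finite v)) as [_ H].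
    apply H. intros x [pi [Hpi E]].
    assert (L : Rbar_le (VA beta C delta pi b) (Lim_seq (fun _ => 0))).
    { unfold VA. apply Lim_seq_le_loc. exists O. intros n _.
      apply Vn_nonpos; auto; lra. }
    rewrite Lim_seq_const, E in L. exact L. }
  assert (Pz : forall b, (b = 0 \/ b = 1) -> VAstar beta C delta b = Finite 0).
  { intros b Hb.
    destruct (Lub_Rbar_correct (fun v => exists pi, policy pi /\ VA beta C delta pi b = Finite v)) as [Hu _].
    apply Rbar_le_antisym.
    - apply P1. destruct Hb as [-> | ->]; lra.
    - apply Hu. exists (fun _ => p). split.
      + intros x. lra.
      + eapply VA_zero; eauto. }
  split; [exact P1|].
  split.
  { intros b _. unfold VAstar. apply Lub_Rbar_eqset. intros x. split.
    - intros [pi [Hpi E]]. exists (fun t => pi (1 - t)). split.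
      + intros t; apply Hpi.
      + rewrite VA_sym. exact E.
    - intros [pi [Hpi E]]. exists (fun t => pi (1 - t)). split.
      + intros t; apply Hpi.
      + rewrite <- E. rewrite <- (VA_sym beta C delta pi (1 - b)).
        replace (1 - (1 - b)) with b by ring. reflexivity. }
  split; [apply Pz; auto|].
  split; [apply Pz; auto|].
  intros pi Hpi H0 H1. rewrite !Pz by auto.
  split; eapply VA_zero; eauto.
Qed.
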